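(* Let $\varepsilon\in\{1,-1\}$, $\delta\in\{-1,0,1\}$, and fix $(\phi_1,\phi_2,\phi_3)\in I_\delta^3$. For $(r_1,r_2,r_3)\in\mathcal{M}_{\varepsilon,\delta}(\phi_1,\phi_2,\phi_3)$ let $\theta_1,\theta_2,\theta_3$ be the generalized angles of the type $(\varepsilon,\varepsilon,\varepsilon)$ triangle $\Delta v_1v_2v_3$ with edge lengths $l_1,l_2,l_3$ ($\theta_i$ at $v_i$, opposite $l_i$), and set $u_i=-\int_{r_i}^\infty\frac{dt}{\tau_{\varepsilon\delta}(t)}$. Then the Jacobian matrix $\big(\partial\theta_i/\partial u_j\big)_{3\times3}$ of the map $u\mapsto(\theta_1,\theta_2,\theta_3)$ on $u(\mathcal{M}_{\varepsilon,\delta}(\phi_1,\phi_2,\phi_3))$ is symmetric.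
   Context: Generalized hyperbolic triangles (in $\mathbb{H}^2$) are convex regions bounded by three geodesics (forming a Euclidean triangle in the Klein model) truncated by common perpendiculars at vertices outside $\overline{\mathbb{H}^2}$, with horodisks at ideal vertices; a generalized vertex has type $1$ (in $\mathbb{H}^2$), $0$ (ideal) or $-1$ (hyperideal). Generalized angle: interior angle (type 1), twice the horocyclic arc length between the sides (type 0), distance between the two sides (type $-1$). Generalized edge length between generalized vertices $u,v$: with $B_u$ the point, the horodisk, or the half-plane beyond the truncating perpendicular, it is $d(B_u,B_v)$ if these are disjoint and minus the distance between the points where $\partial B_u,\partial B_v$ meet the side otherwise. $I_\delta=\mathbb{R}_{>0}$ for $\delta\in\{0,-1\}$, $(0,\pi]$ for $\delta=1$; $J_\sigma=\mathbb{R}_{>0}$ for $\sigma=\pm1$, $J_0=\mathbb{R}$; $\tau_s(t)=\frac12e^t-\frac12se^{-t}$. For $\{i,j,k\}=\{1,2,3\}$, $l_k$ denotes the generalized length of the third side of a generalized triangle of type $(\varepsilon,\varepsilon,\delta)$ whose two sides at the type-$\delta$ vertex have lengths $r_i,r_j$ and generalized angle $\phi_k$ between them, when it exists (when $\delta=1,\phi_k=\pi$, $l_k=r_i+r_j$). $\mathcal{M}_{\varepsilon,\delta}(\phi_1,\phi_2,\phi_3)$ is the set of $(r_1,r_2,r_3)\in(J_{\varepsilon\delta})^3$ for which $l_1,l_2,l_3$ are defined and are the edge lengths of some generalized triangle of type $(\varepsilon,\varepsilon,\varepsilon)$. *)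

(* Defs.v *)
From Stdlib Require Import Reals ZArith.
Open Scope R_scope.

Inductive idx : Set := i1 | i2 | i3.

Definition idx_eqb (a b : idx) : bool :=
  match a, b with
  | i1, i1 | i2, i2 | i3, i3 => true
  | _, _ => false
  end.

(* cyclic successor: for k, the other two indices are (nxt k) and (nxt (nxt k)) *)
Definition nxt (a : idx) : idx := match a with i1 => i2 | i2 => i3 | i3 => i1 end.

Definition upd (r : idx -> R) (j : idx) (t : R) : idx -> R :=
  fun m => if idx_eqb m j then t else r m.

Definition tau (s : Z) (t : R) : R := / 2 * exp t - / 2 * IZR s * exp (- t).

Definition In_I (delta : Z) (phi : R) : Prop :=
  if Z.eqb delta 1 then 0 < phi <= PI else 0 < phi.

Definition In_J (sigma : Z) (r : R) : Prop :=
  if Z.eqb sigma 0 then True else 0 < r.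

(* Generalized hyperbolic cosine law.  For generalized vertices a, b of types
   e_a, e_b at generalized distance l, the Lorentzian pairing of the
   normalized vectors is  -<v_a,v_b> = tau_{-e_a e_b}(l)
   (cosh for equal nonzero types, sinh for types (1,-1), e^l/2 with an
   ideal vertex).  In a triangle of type (eps,eps,delta) whose two sides at the
   type-delta vertex have lengths ri, rj and generalized angle phi, the value
   tau_{-1}(l) = cosh l of the third side l is: *)
Definition cosh_third (eps delta : Z) (ri rj phi : R) : R :=
  if Z.eqb delta 1 then
    tau (- (eps * delta)) ri * tau (- (eps * delta)) rj
    - cos phi * tau (eps * delta) ri * tau (eps * delta) rj
  else if Z.eqb delta (-1) then
    cosh phi * tau (eps * delta) ri * tau (eps * delta) rj
    - tau (- (eps * delta)) ri * tau (- (eps * delta)) rj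
  else (* delta = 0 : generalized angle = twice the horocyclic arc *)
    let ci := tau 0 ri in let cj := tau 0 rj in
    phi ^ 2 / 2 * ci * cj + IZR eps * (ci ^ 2 + cj ^ 2) / (2 * ci * cj).

Definition arcosh (x : R) : R := ln (x + sqrt (x ^ 2 - 1)).

(* l_k is defined iff the type (eps,eps,delta) triangle exists, i.e. iff the
   computed cosh of the third side exceeds 1 *)
Definition l_defined (eps delta : Z) (phi r : idx -> R) (k : idx) : Prop :=
  1 < cosh_third eps delta (r (nxt k)) (r (nxt (nxt k))) (phi k).

Definition l_len (eps delta : Z) (phi r : idx -> R) (k : idx) : R :=
  arcosh (cosh_third eps delta (r (nxt k)) (r (nxt (nxt k))) (phi k)).

(* (l1,l2,l3) are the edge lengths of a generalized triangle of type
   (eps,eps,eps), eps = +-1: for eps = 1 a compact hyperbolic triangle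
   (positive lengths + strict triangle inequalities); for eps = -1 a
   right-angled hexagon (any positive alternate side lengths). *)
Definition triangle_lengths (eps : Z) (l : idx -> R) : Prop :=
  (forall k, 0 < l k) /\
  (Z.eqb eps 1 = true -> forall k, l k < l (nxt k) + l (nxt (nxt k))).

Definition gen_angle (eps : Z) (l : idx -> R) (i : idx) : R :=
  let a := l i in let b := l (nxt i) in let c := l (nxt (nxt i)) in
  if Z.eqb eps 1 then acos ((cosh b * cosh c - cosh a) / (sinh b * sinh c))
  else arcosh ((cosh b * cosh c + cosh a) / (sinh b * sinh c)).

Definition in_M (eps delta : Z) (phi r : idx -> R) : Prop :=
  (forall k, In_J (eps * delta) (r k)) /\
  (forall k, l_defined eps delta phi r k) /\
  triangle_lengths eps (l_len eps delta phi r).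

Definition theta (eps delta : Z) (phi r : idx -> R) (i : idx) : R :=
  gen_angle eps (l_len eps delta phi r) i.

Definition improper_integral (f : R -> R) (a I : R) : Prop :=
  (forall b, a <= b -> inhabited (Riemann_integrable f a b)) /\
  (forall e, 0 < e -> exists B, forall b (pr : Riemann_integrable f a b),
      a <= b -> B <= b -> Rabs (RiemannInt pr - I) < e).

(* D is the partial derivative d theta_i / d u_j at the point u(r) of the map
   u |-> theta on u(M), where u_m = U (r_m) coordinatewise. *)
Definition partial_theta_u (eps delta : Z) (phi : idx -> R) (U : R -> R)
    (r : idx -> R) (i j : idx) (D : R) : Prop :=
  forall e, 0 < e -> exists d, 0 < d /\
    forall t, in_M eps delta phi (upd r j t) ->
      0 < Rabs (U t - U (r j)) < d ->
      Rabs ((theta eps delta phi (upd r j t) i - theta eps delta phi r i)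
            / (U t - U (r j)) - D) < e.

(* Main.v *)
Require Import Defs.
From Stdlib Require Import Reals ZArith Lra FunctionalExtensionality.
From Coquelicot Require Import Coquelicot.
Open Scope R_scope.

Lemma D_ext f x l l' : derivable_pt_lim f x l -> l = l' -> derivable_pt_lim f x l'.
Proof. intros H ->; exact H. Qed.
Lemma D_mul f g x a b : derivable_pt_lim f x a -> derivable_pt_lim g x b ->
  derivable_pt_lim (fun t => f t * g t) x (a * g x + f x * b).
Proof. intros H1 H2; exact (derivable_pt_lim_mult f g x a b H1 H2). Qed.
Lemma D_add f g x a b : derivable_pt_lim f x a -> derivable_pt_lim g x b ->
  derivable_pt_lim (fun t => f t + g t) x (a + b).
Proof. intros H1 H2; exact (derivable_pt_lim_plus f g x a b H1 H2). Qed.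
Lemma D_sub f g x a b : derivable_pt_lim f x a -> derivable_pt_lim g x b ->
  derivable_pt_lim (fun t => f t - g t) x (a - b).
Proof. intros H1 H2; exact (derivable_pt_lim_minus f g x a b H1 H2). Qed.
Lemma D_div f g x a b : derivable_pt_lim f x a -> derivable_pt_lim g x b -> g x <> 0 ->
  derivable_pt_lim (fun t => f t / g t) x ((a * g x - b * f x) / (g x)²).
Proof. intros H1 H2 H3; exact (derivable_pt_lim_div f g x a b H1 H2 H3). Qed.
Lemma D_comp h f x a b : derivable_pt_lim f x a -> derivable_pt_lim h (f x) b ->
  derivable_pt_lim (fun t => h (f t)) x (b * a).
Proof. intros H1 H2; exact (derivable_pt_lim_comp f h x a b H1 H2). Qed.
Lemma D_const c x : derivable_pt_lim (fun _ => c) x 0.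
Proof. exact (derivable_pt_lim_const c x). Qed.

Lemma arcosh_facts A : 1 < A ->
  cosh (arcosh A) = A /\ sinh (arcosh A) = sqrt (A^2-1) /\ 0 < sqrt (A^2-1).
Proof.
  intros HA. set (S := sqrt (A^2-1)).
  assert (HS2 : S * S = A^2 - 1) by (apply sqrt_sqrt; nra).
  assert (HS : 0 < S) by (apply sqrt_lt_R0; nra).
  assert (HAS : 0 < A + S) by lra.
  assert (Hinv : / (A + S) = A - S).
  { field_simplify_eq; [nra | lra]. }
  unfold arcosh, cosh, sinh. fold S.
  rewrite exp_Ropp, exp_ln by lra. rewrite Hinv. split; [|split]; [lra|lra|exact HS].
Qed.

Lemma D_arcosh A : 1 < A -> derivable_pt_lim arcosh A (/ sqrt (A^2-1)).
Proof.
  intros HA.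
  assert (HS2 : sqrt (A^2-1) * sqrt (A^2-1) = A^2 - 1) by (apply sqrt_sqrt; nra).
  assert (HS : 0 < sqrt (A^2-1)) by (apply sqrt_lt_R0; nra).
  apply is_derive_Reals. unfold arcosh.
  auto_derive; replace (A * (A * 1) + - (1)) with (A^2-1) by ring.
  - repeat split; try exact I; nra.
  - field. split; lra.
Qed.

Lemma D_acos w : -1 < w < 1 -> derivable_pt_lim acos w (-1 / sqrt (1 - w²)).
Proof. intros H. apply (derive_pt_eq_1 _ _ _ (derivable_pt_acos w H)). apply derive_pt_acos. Qed.

Lemma D_ch A t da : derivable_pt_lim A t da -> 1 < A t ->
  derivable_pt_lim (fun x => cosh (arcosh (A x))) t da.
Proof.
  intros H1 H2. destruct (arcosh_facts _ H2) as [Hc [Hs Hp]].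
  eapply D_ext.
  - apply (D_comp cosh (fun x => arcosh (A x))).
    + apply (D_comp arcosh A); [exact H1| apply D_arcosh; exact H2].
    + apply derivable_pt_lim_cosh.
  - rewrite Hs. field. lra.
Qed.

Lemma D_sh A t da : derivable_pt_lim A t da -> 1 < A t ->
  derivable_pt_lim (fun x => sinh (arcosh (A x))) t (A t * da / sqrt (A t ^ 2 - 1)).
Proof.
  intros H1 H2. destruct (arcosh_facts _ H2) as [Hc [Hs Hp]].
  eapply D_ext.
  - apply (D_comp sinh (fun x => arcosh (A x))).
    + apply (D_comp arcosh A); [exact H1| apply D_arcosh; exact H2].
    + apply derivable_pt_lim_sinh.
  - rewrite Hc. field. lra.
Qed.

Definition Ang (eps : Z) (A B C : R) : R :=
  let a := arcosh A in let b := arcosh B in let c := arcosh C in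
  if Z.eqb eps 1 then acos ((cosh b * cosh c - cosh a) / (sinh b * sinh c))
  else arcosh ((cosh b * cosh c + cosh a) / (sinh b * sinh c)).

Definition Dlt (e : Z) (a b c : R) : R :=
  IZR e * (1 - a^2 - b^2 - c^2) + 2 * a * b * c.

Definition JE1 (e : Z) (a b c da db dc : R) : R :=
  - IZR e * ((db * c + b * dc - IZR e * da) * (b^2-1) * (c^2-1)
             - (b * c - IZR e * a) * (b * db * (c^2-1) + c * dc * (b^2-1)))
  / ((b^2-1) * (c^2-1) * sqrt (Dlt e a b c)).

Lemma sqrt_div_sq X P : 0 < P -> sqrt (X / (P * P)) = sqrt X / P.
Proof.
  intros HP. rewrite sqrt_div_alt by nra. rewrite sqrt_square by lra. reflexivity.
Qed.

Lemma Ang_deriv eps A B C t da db dc :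
  (eps = 1%Z \/ eps = (-1)%Z) ->
  derivable_pt_lim A t da -> derivable_pt_lim B t db -> derivable_pt_lim C t dc ->
  1 < A t -> 1 < B t -> 1 < C t -> 0 < Dlt eps (A t) (B t) (C t) ->
  derivable_pt_lim (fun x => Ang eps (A x) (B x) (C x)) t
    (JE1 eps (A t) (B t) (C t) da db dc).
Proof.
  intros He HA HB HC hA hB hC hD.
  destruct (arcosh_facts _ hA) as [cA [sA pA]].
  destruct (arcosh_facts _ hB) as [cB [sB pB]].
  destruct (arcosh_facts _ hC) as [cC [sC pC]].
  pose proof (D_ch A t da HA hA) as dcA.
  pose proof (D_ch B t db HB hB) as dcB.
  pose proof (D_ch C t dc HC hC) as dcC.
  pose proof (D_sh A t da HA hA) as dsA.
  pose proof (D_sh B t db HB hB) as dsB.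
  pose proof (D_sh C t dc HC hC) as dsC.
  assert (HSb2 : sqrt (B t ^ 2 - 1) * sqrt (B t ^ 2 - 1) = B t ^ 2 - 1) by (apply sqrt_sqrt; nra).
  assert (HSc2 : sqrt (C t ^ 2 - 1) * sqrt (C t ^ 2 - 1) = C t ^ 2 - 1) by (apply sqrt_sqrt; nra).
  assert (HQ : 0 < sqrt (Dlt eps (A t) (B t) (C t))) by (apply sqrt_lt_R0; exact hD).
  assert (HQ2 : sqrt (Dlt eps (A t) (B t) (C t)) * sqrt (Dlt eps (A t) (B t) (C t))
     = Dlt eps (A t) (B t) (C t)) by (apply sqrt_sqrt; lra).
  unfold JE1. revert hD HQ HQ2. unfold Dlt.
  set (a := A t) in *. set (b := B t) in *. set (c := C t) in *.
  set (Sb := sqrt (b^2-1)) in *. set (Sc := sqrt (c^2-1)) in *.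
  intros hD HQ HQ2.
  set (Q := sqrt (IZR eps * (1 - a ^ 2 - b ^ 2 - c ^ 2) + 2 * a * b * c)) in *.
  destruct He as [He|He]; subst eps; unfold Ang; cbv [Z.eqb Pos.eqb].
  - assert (Hw : 1 - ((b * c - a) / (Sb * Sc))² = Q * Q / ((Sb * Sc) * (Sb * Sc))).
    { replace (1 - ((b * c - a) / (Sb * Sc))²) with
        (((Sb*Sb)*(Sc*Sc) - (b*c-a)^2)/((Sb*Sc)*(Sb*Sc))) by (unfold Rsqr; field; lra).
      rewrite HSb2, HSc2, HQ2. f_equal. ring. }
    assert (Hw1 : -1 < (b * c - a) / (Sb * Sc) < 1).
    { assert (H0 : 0 < Q * Q / ((Sb * Sc) * (Sb * Sc))).
      { apply Rdiv_lt_0_compat; repeat apply Rmult_lt_0_compat; assumption. }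
      rewrite <- Hw in H0. unfold Rsqr in H0.
      set (w := (b * c - a) / (Sb * Sc)) in *. split; nra. }
    eapply D_ext.
    + apply (D_comp acos (fun x => (cosh (arcosh (B x)) * cosh (arcosh (C x)) - cosh (arcosh (A x))) /
                         (sinh (arcosh (B x)) * sinh (arcosh (C x))))).
      * apply D_div. apply D_sub. apply D_mul; eassumption. eassumption.
        apply D_mul; eassumption.
        fold a b c. rewrite sB, sC. fold Sb Sc. nra.
      * fold a b c. rewrite cA, cB, cC, sB, sC. fold Sb Sc. apply D_acos. exact Hw1.
    + cbv beta. fold a b c. rewrite cA, cB, cC, sB, sC. fold Sb Sc.
      rewrite Hw, sqrt_div_sq by (repeat apply Rmult_lt_0_compat; assumption).
      rewrite <- HSb2, <- HSc2. fold Sb Sc.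
      rewrite sqrt_square by lra. unfold Rsqr. clearbody Q Sb Sc. field. repeat split; lra.
  - assert (Hw : ((b * c + a) / (Sb * Sc))^2 - 1 = Q * Q / ((Sb * Sc) * (Sb * Sc))).
    { replace (((b * c + a) / (Sb * Sc))^2 - 1) with
        (((b*c+a)^2 - (Sb*Sb)*(Sc*Sc))/((Sb*Sc)*(Sb*Sc))) by (field; lra).
      rewrite HSb2, HSc2, HQ2. f_equal. ring. }
    assert (Hw1 : 1 < (b * c + a) / (Sb * Sc)).
    { assert (H0 : 0 < Q * Q / ((Sb * Sc) * (Sb * Sc))).
      { apply Rdiv_lt_0_compat; repeat apply Rmult_lt_0_compat; assumption. }
      assert (H1 : 0 < (b * c + a) / (Sb * Sc)).
      { apply Rdiv_lt_0_compat; [nra| apply Rmult_lt_0_compat; assumption]. }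
      rewrite <- Hw in H0.
      set (w := (b * c + a) / (Sb * Sc)) in *. nra. }
    eapply D_ext.
    + apply (D_comp arcosh (fun x => (cosh (arcosh (B x)) * cosh (arcosh (C x)) + cosh (arcosh (A x))) /
                         (sinh (arcosh (B x)) * sinh (arcosh (C x))))).
      * apply D_div. apply D_add. apply D_mul; eassumption. eassumption.
        apply D_mul; eassumption.
        fold a b c. rewrite sB, sC. fold Sb Sc. nra.
      * fold a b c. rewrite cA, cB, cC, sB, sC. fold Sb Sc. apply D_arcosh. exact Hw1.
    + cbv beta. fold a b c. rewrite cA, cB, cC, sB, sC. fold Sb Sc.
      rewrite Hw, sqrt_div_sq by (repeat apply Rmult_lt_0_compat; assumption).
      rewrite <- HSb2, <- HSc2. fold Sb Sc.
      rewrite sqrt_square by lra. unfold Rsqr. clearbody Q Sb Sc. field. repeat split; lra.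
Qed.

Lemma tau_pos s t : (s = (-1)%Z \/ s = 0%Z \/ s = 1%Z) -> In_J s t -> 0 < tau s t.
Proof.
  unfold In_J, tau. intros [-> | [-> | ->]] H; cbv [Z.eqb Pos.eqb] in H.
  - pose proof (exp_pos t); pose proof (exp_pos (-t)). lra.
  - pose proof (exp_pos t); pose proof (exp_pos (-t)). lra.
  - assert (exp (-t) < exp t) by (apply exp_increasing; lra). lra.
Qed.

Lemma C_sym eps delta a b phi :
  cosh_third eps delta a b phi = cosh_third eps delta b a phi.
Proof.
  unfold cosh_third. destruct (Z.eqb delta 1); [ring|].
  destruct (Z.eqb delta (-1)); [ring|]. cbv zeta.
  replace (2 * tau 0 b * tau 0 a) with (2 * tau 0 a * tau 0 b) by ring. rewrite (Rplus_comm (tau 0 b ^ 2)). f_equal. ring.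
Qed.

Lemma D_C1 eps delta phi a b :
  (eps = 1%Z \/ eps = (-1)%Z) -> (delta = (-1)%Z \/ delta = 0%Z \/ delta = 1%Z) ->
  0 < tau (eps*delta) a ->
  derivable_pt_lim (fun t => cosh_third eps delta t b phi) a
    ((tau (-(eps*delta)) a * cosh_third eps delta a b phi - IZR eps * tau (-(eps*delta)) b)
      / tau (eps*delta) a).
Proof.
  intros He Hd Ht.
  destruct He as [->| ->]; destruct Hd as [->|[->| ->]]; revert Ht;
  unfold cosh_third, tau; cbv [Z.eqb Pos.eqb Z.mul Z.opp Pos.mul]; intros Ht;
  apply is_derive_Reals; auto_derive; rewrite ?exp_Ropp in *.
  all: pose proof (exp_pos a); pose proof (exp_pos b).
  all: try exact I.
  all: try (apply Rgt_not_eq || apply Rlt_not_eq'; ring_simplify; repeat apply Rmult_lt_0_compat; try apply Rinv_0_lt_compat; lra).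
  all: try (field; repeat split; try (apply Rgt_not_eq); try lra; fail).
  all: field; assert (exp a * / exp a = 1) by (apply Rinv_r; lra);
       assert (0 < / exp a) by (apply Rinv_0_lt_compat; lra);
       repeat split; nra.
Qed.

Lemma cosh_sq x : cosh x ^ 2 = 1 + sinh x ^ 2.
Proof.
  unfold cosh, sinh. rewrite exp_Ropp. pose proof (exp_pos x). field. lra.
Qed.

Lemma cosh_add x y : cosh (x + y) = cosh x * cosh y + sinh x * sinh y.
Proof.
  unfold cosh, sinh. rewrite !exp_Ropp, !exp_plus.
  pose proof (exp_pos x); pose proof (exp_pos y). field. lra.
Qed.

Lemma cosh_sub x y : cosh (x - y) = cosh x * cosh y - sinh x * sinh y.
Proof.
  unfold Rminus. rewrite cosh_add. unfold cosh, sinh. rewrite Ropp_involutive. field.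
Qed.

Lemma cosh_even x : cosh (- x) = cosh x.
Proof. unfold cosh. rewrite Ropp_involutive. field. Qed.

Lemma sinh_pos x : 0 < x -> 0 < sinh x.
Proof.
  intros H. unfold sinh. assert (exp (-x) < exp x) by (apply exp_increasing; lra). lra.
Qed.

Lemma cosh_lt x y : 0 <= x < y -> cosh x < cosh y.
Proof.
  intros H. unfold cosh. rewrite !exp_Ropp.
  assert (HX : 1 <= exp x).
  { destruct (Req_dec x 0) as [->|]; [rewrite exp_0; lra|].
    rewrite <- exp_0. left. apply exp_increasing. lra. }
  assert (HXY : exp x < exp y) by (apply exp_increasing; lra).
  assert (HI : / exp y < / exp x) by (apply Rinv_lt_contravar; nra).
  assert (exp x * / exp x = 1) by (apply Rinv_r; lra).
  assert (exp y * / exp y = 1) by (apply Rinv_r; lra).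
  assert (0 < / exp y) by (apply Rinv_0_lt_compat; lra).
  assert (exp y - exp x > / exp x - / exp y).
  { replace (/ exp x - / exp y) with ((exp y - exp x) * (/ exp x * / exp y)) by (field; lra).
    assert (/ exp x * / exp y < 1).
    { assert (/ exp x <= 1). { rewrite <- Rinv_1. apply Rinv_le_contravar; lra. }
      nra. }
    nra. }
  lra.
Qed.

Lemma Delta_pos1 a b c : 0 < a -> 0 < b -> 0 < c -> a < b + c -> b < a + c -> c < a + b ->
  0 < Dlt 1%Z (cosh a) (cosh b) (cosh c).
Proof.
  intros Ha Hb Hc H1 H2 H3.
  assert (h1 : cosh (b - c) < cosh a).
  { destruct (Rle_dec c b).
    - apply cosh_lt; lra.
    - replace (b - c) with (- (c - b)) by ring. rewrite cosh_even. apply cosh_lt; lra. }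
  assert (h2 : cosh a < cosh (b + c)) by (apply cosh_lt; lra).
  rewrite cosh_sub in h1. rewrite cosh_add in h2.
  assert (HP : 0 < (sinh b * sinh c - cosh b * cosh c + cosh a) *
                   (sinh b * sinh c + cosh b * cosh c - cosh a)) by (apply Rmult_lt_0_compat; lra).
  unfold Dlt. rewrite (cosh_sq b), (cosh_sq c).
  replace (IZR 1 * (1 - cosh a ^ 2 - (1 + sinh b ^ 2) - (1 + sinh c ^ 2)) +
           2 * cosh a * cosh b * cosh c)
  with ((sinh b * sinh c - cosh b * cosh c + cosh a) *
        (sinh b * sinh c + cosh b * cosh c - cosh a) + (cosh b ^2 - 1 - sinh b ^2) * (cosh c^2) + (cosh c ^ 2 - 1 - sinh c ^ 2) * (1 + sinh b ^2))
  by ring.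
  rewrite (cosh_sq b), (cosh_sq c). lra.
Qed.

Lemma Delta_posm1 a b c : 1 < a -> 1 < b -> 1 < c -> 0 < Dlt (-1)%Z a b c.
Proof. intros. unfold Dlt. assert (0 < a*b) by nra. assert (0 < a*b*c) by nra. nra. Qed.

Definition Cv (eps delta : Z) (phi r : idx -> R) (m : idx) : R :=
  cosh_third eps delta (r (nxt m)) (r (nxt (nxt m))) (phi m).

Definition third (a b : idx) : idx :=
  match a, b with
  | i1, i2 | i2, i1 => i3
  | i1, i3 | i3, i1 => i2
  | _, _ => i1
  end.

Definition dC (eps delta : Z) (phi r : idx -> R) (m j : idx) : R :=
  if idx_eqb m j then 0 else
  (tau (-(eps*delta)) (r j) * Cv eps delta phi r m
   - IZR eps * tau (-(eps*delta)) (r (third m j))) / tau (eps*delta) (r j).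

Definition G (eps delta : Z) (phi r : idx -> R) (i j : idx) : R :=
  JE1 eps (Cv eps delta phi r i) (Cv eps delta phi r (nxt i)) (Cv eps delta phi r (nxt (nxt i)))
     (dC eps delta phi r i j) (dC eps delta phi r (nxt i) j) (dC eps delta phi r (nxt (nxt i)) j).

Lemma upd_same (r : idx -> R) j : upd r j (r j) = r.
Proof. apply functional_extensionality. intros m. unfold upd. destruct m, j; reflexivity. Qed.

Lemma D_C2 eps delta phi a b :
  (eps = 1%Z \/ eps = (-1)%Z) -> (delta = (-1)%Z \/ delta = 0%Z \/ delta = 1%Z) ->
  0 < tau (eps*delta) a ->
  derivable_pt_lim (fun t => cosh_third eps delta b t phi) a
    ((tau (-(eps*delta)) a * cosh_third eps delta b a phi - IZR eps * tau (-(eps*delta)) b)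
      / tau (eps*delta) a).
Proof.
  intros He Hd Ht.
  replace (fun t => cosh_third eps delta b t phi) with (fun t => cosh_third eps delta t b phi)
    by (apply functional_extensionality; intros; apply C_sym).
  rewrite C_sym. apply D_C1; assumption.
Qed.

Lemma Cf_deriv eps delta phi r m j :
  (eps = 1%Z \/ eps = (-1)%Z) -> (delta = (-1)%Z \/ delta = 0%Z \/ delta = 1%Z) ->
  0 < tau (eps*delta) (r j) ->
  derivable_pt_lim (fun t => cosh_third eps delta (upd r j t (nxt m)) (upd r j t (nxt (nxt m))) (phi m))
    (r j) (dC eps delta phi r m j).
Proof.
  intros He Hd Ht. unfold dC, Cv.
  destruct m, j; cbv [upd idx_eqb nxt third];
  first [ apply D_const | apply D_C1; assumption | apply D_C2; assumption ].
Qed.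

Lemma theta_deriv eps delta phi r i j :
  (eps = 1%Z \/ eps = (-1)%Z) -> (delta = (-1)%Z \/ delta = 0%Z \/ delta = 1%Z) ->
  0 < tau (eps*delta) (r j) ->
  (forall m, 1 < Cv eps delta phi r m) ->
  0 < Dlt eps (Cv eps delta phi r i) (Cv eps delta phi r (nxt i)) (Cv eps delta phi r (nxt (nxt i))) ->
  derivable_pt_lim (fun t => theta eps delta phi (upd r j t) i) (r j) (G eps delta phi r i j).
Proof.
  intros He Hd Ht HC HD.
  change (derivable_pt_lim (fun t => Ang eps
     (cosh_third eps delta (upd r j t (nxt i)) (upd r j t (nxt (nxt i))) (phi i))
     (cosh_third eps delta (upd r j t (nxt (nxt i))) (upd r j t (nxt (nxt (nxt i)))) (phi (nxt i)))
     (cosh_third eps delta (upd r j t (nxt (nxt (nxt i)))) (upd r j t (nxt (nxt (nxt (nxt i))))) (phi (nxt (nxt i)))))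
     (r j) (G eps delta phi r i j)).
  eapply D_ext.
  - apply Ang_deriv; [exact He | apply Cf_deriv; assumption .. | | | | ];
    cbv beta; rewrite upd_same; [exact (HC i) | exact (HC (nxt i)) | exact (HC (nxt (nxt i))) | exact HD].
  - cbv beta. rewrite upd_same. reflexivity.
Qed.

Definition Sym (e : Z) (Ci Cj Ck yi yj yk : R) : R :=
  ((Ck^2-1)*(yj*Ci - IZR e*yk) - (Ci*Ck - IZR e*Cj)*(yj*Ck - IZR e*yi))
  / ((Ck^2-1) * sqrt (Dlt e Ci Cj Ck)).

Lemma std_form e Ci Cj Ck xj yi yj yk :
  (e = 1%Z \/ e = (-1)%Z) -> xj <> 0 -> 1 < Cj -> 1 < Ck -> 0 < Dlt e Ci Cj Ck ->
  JE1 e Ci Cj Ck ((yj*Ci - IZR e*yk)/xj) 0 ((yj*Ck - IZR e*yi)/xj) * xj = Sym e Ci Cj Ck yi yj yk.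
Proof.
  intros He Hx HCj HCk HD.
  assert (0 < sqrt (Dlt e Ci Cj Ck)) by (apply sqrt_lt_R0; exact HD).
  unfold JE1, Sym. revert H. generalize (sqrt (Dlt e Ci Cj Ck)). intros Q HQ.
  destruct He as [-> | ->]; field; repeat split; try nra.
Qed.

Lemma JE1_swap e A B C dA dB dC :
  JE1 e A B C dA dB dC = JE1 e A C B dA dC dB.
Proof.
  unfold JE1. replace (Dlt e A C B) with (Dlt e A B C) by (unfold Dlt; ring).
  unfold Rdiv. f_equal; [ring | f_equal; ring].
Qed.

Lemma Sym_sym e Ci Cj Ck yi yj yk : (e = 1%Z \/ e = (-1)%Z) ->
  Sym e Ci Cj Ck yi yj yk = Sym e Cj Ci Ck yj yi yk.
Proof.
  intros He. unfold Sym. replace (Dlt e Cj Ci Ck) with (Dlt e Ci Cj Ck) by (unfold Dlt; ring).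
  unfold Rdiv. f_equal. destruct He as [-> | ->]; ring.
Qed.

Lemma G_sym eps delta phi r i j :
  (eps = 1%Z \/ eps = (-1)%Z) ->
  (forall m, 0 < tau (eps*delta) (r m)) ->
  (forall m, 1 < Cv eps delta phi r m) ->
  0 < Dlt eps (Cv eps delta phi r i1) (Cv eps delta phi r i2) (Cv eps delta phi r i3) ->
  G eps delta phi r i j * tau (eps*delta) (r j) = G eps delta phi r j i * tau (eps*delta) (r i).
Proof.
  intros He Ht HC HD.
  set (C1 := Cv eps delta phi r i1) in *. set (C2 := Cv eps delta phi r i2) in *.
  set (C3 := Cv eps delta phi r i3) in *.
  assert (D213 : 0 < Dlt eps C2 C1 C3) by (unfold Dlt in *; lra).
  assert (D132 : 0 < Dlt eps C1 C3 C2) by (unfold Dlt in *; lra).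
  assert (D312 : 0 < Dlt eps C3 C1 C2) by (unfold Dlt in *; lra).
  assert (D231 : 0 < Dlt eps C2 C3 C1) by (unfold Dlt in *; lra).
  assert (D321 : 0 < Dlt eps C3 C2 C1) by (unfold Dlt in *; lra).
  assert (HC1 := HC i1). assert (HC2 := HC i2). assert (HC3 := HC i3).
  fold C1 C2 C3 in HC1, HC2, HC3.
  assert (X1 := Ht i1). assert (X2 := Ht i2). assert (X3 := Ht i3).
  destruct i, j; try reflexivity; unfold G, dC; cbv [idx_eqb nxt third];
  fold C1 C2 C3;
  try rewrite (JE1_swap _ _ _ _ _ _ 0);
  rewrite !std_form by (auto; lra);
  apply Sym_sym; exact He.
Qed.

Definition scase (s : Z) := s = (-1)%Z \/ s = 0%Z \/ s = 1%Z.

Lemma RInt_swapR (f : R -> R) a b : ex_RInt f a b -> RInt f b a = - RInt f a b.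
Proof. intros H. rewrite <- (opp_RInt_swap f a b H). reflexivity. Qed.

Lemma ChaslesR (f : R -> R) a b c : ex_RInt f a b -> ex_RInt f b c ->
  RInt f a b + RInt f b c = RInt f a c.
Proof. intros H1 H2. exact (RInt_Chasles f a b c H1 H2). Qed.

Lemma J_between s a b z : scase s -> In_J s a -> In_J s b -> Rmin a b <= z <= Rmax a b -> In_J s z.
Proof.
  unfold scase, In_J. intros [-> | [-> | ->]] Ha Hb Hz; cbv [Z.eqb Pos.eqb] in *; auto;
  unfold Rmin, Rmax in Hz; destruct (Rle_dec a b); lra.
Qed.

Lemma J_up s a z : scase s -> In_J s a -> a <= z -> In_J s z.
Proof.
  unfold scase, In_J. intros [-> | [-> | ->]] Ha Hz; cbv [Z.eqb Pos.eqb] in *; auto; lra.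
Qed.

Lemma f_cont s z : scase s -> In_J s z -> continuous (fun t => / tau s t) z.
Proof.
  intros Hs Hz. pose proof (tau_pos s z Hs Hz) as Ht.
  apply (@ex_derive_continuous R_AbsRing R_NormedModule). unfold tau in *. auto_derive. lra.
Qed.

Lemma f_pos s z : scase s -> In_J s z -> 0 < / tau s z.
Proof. intros Hs Hz. apply Rinv_0_lt_compat. apply tau_pos; assumption. Qed.

Lemma ex_RInt_J s a b : scase s -> In_J s a -> In_J s b -> ex_RInt (fun t => / tau s t) a b.
Proof.
  intros Hs Ha Hb. apply (@ex_RInt_continuous R_CompleteNormedModule). intros z Hz. apply f_cont; [exact Hs|].
  exact (J_between s a b z Hs Ha Hb Hz).
Qed.

Lemma eq_of_close a b : (forall e, 0 < e -> Rabs (a - b) < e) -> a = b.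
Proof.
  intros H. destruct (Req_dec a b) as [|Hne]; [assumption|].
  assert (0 < Rabs (a - b)) by (apply Rabs_pos_lt; lra).
  specialize (H _ H0). lra.
Qed.

Lemma U_diff s U x t : scase s ->
  (forall r, In_J s r -> improper_integral (fun t => / tau s t) r (- U r)) ->
  In_J s x -> In_J s t -> U t - U x = RInt (fun u => / tau s u) x t.
Proof.
  intros Hs HU Hx Ht. set (f := fun u => / tau s u).
  destruct (HU t Ht) as [It Lt]. destruct (HU x Hx) as [Ix Lx].
  symmetry. apply eq_of_close. intros e He.
  destruct (Lt (e/2) ltac:(lra)) as [B1 HB1].
  destruct (Lx (e/2) ltac:(lra)) as [B2 HB2].
  set (b := Rmax (Rmax t x) (Rmax B1 B2)).
  assert (Htb : t <= b) by (unfold b; apply Rle_trans with (Rmax t x); apply Rmax_l).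
  assert (Hxb : x <= b) by (unfold b; apply Rle_trans with (Rmax t x); [apply Rmax_r | apply Rmax_l]).
  assert (H1b : B1 <= b) by (unfold b; apply Rle_trans with (Rmax B1 B2); [apply Rmax_l | apply Rmax_r]).
  assert (H2b : B2 <= b) by (unfold b; apply Rle_trans with (Rmax B1 B2); apply Rmax_r).
  destruct (It b Htb) as [pr1]. destruct (Ix b Hxb) as [pr2].
  specialize (HB1 b pr1 Htb H1b). specialize (HB2 b pr2 Hxb H2b).
  rewrite <- (RInt_Reals _ _ _ pr1) in HB1. rewrite <- (RInt_Reals _ _ _ pr2) in HB2.
  assert (Hbt : In_J s b).
  { apply (J_up s t b Hs Ht Htb). }
  assert (Ch : RInt f t x + RInt f x b = RInt f t b).
  { apply ChaslesR; apply ex_RInt_J; auto. }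
  assert (Sw : RInt f x t = - RInt f t x).
  { apply RInt_swapR; apply ex_RInt_J; auto. }
  rewrite Sw. fold f in HB1, HB2.
  apply Rabs_def2 in HB1. apply Rabs_def2 in HB2. apply Rabs_def1; lra.
Qed.

Lemma J_nbhd s x : scase s -> In_J s x -> exists d, 0 < d /\ forall y, Rabs (y - x) < d -> In_J s y.
Proof.
  intros Hs Hx. unfold scase, In_J in *.
  destruct Hs as [-> | [-> | ->]]; cbv [Z.eqb Pos.eqb] in *.
  - exists x. split; [lra|]. intros y Hy. apply Rabs_def2 in Hy. lra.
  - exists 1. split; [lra|auto].
  - exists x. split; [lra|]. intros y Hy. apply Rabs_def2 in Hy. lra.
Qed.

Lemma V_deriv s x : scase s -> In_J s x ->
  derivable_pt_lim (fun t => RInt (fun u => / tau s u) x t) x (/ tau s x).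
Proof.
  intros Hs Hx. apply is_derive_Reals.
  apply (is_derive_RInt (fun u => / tau s u) (fun t => RInt (fun u => / tau s u) x t) x x).
  - destruct (J_nbhd s x Hs Hx) as [d [Hd Hy]].
    exists (mkposreal d Hd). intros y Hb. apply (@RInt_correct R_CompleteNormedModule).
    apply ex_RInt_J; auto.
  - apply f_cont; auto.
Qed.

Lemma V_sep s x : scase s -> In_J s x -> forall eta, 0 < eta ->
  exists d, 0 < d /\ forall t, In_J s t ->
    Rabs (RInt (fun u => / tau s u) x t) < d -> Rabs (t - x) < eta.
Proof.
  intros Hs Hx eta Heta. set (f := fun u => / tau s u).
  destruct (J_nbhd s x Hs Hx) as [d0 [Hd0 Hy]].
  set (e := Rmin (eta/2) (d0/2)).
  assert (He : 0 < e) by (unfold e; apply Rmin_glb_lt; lra).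
  assert (He1 : e <= eta/2) by apply Rmin_l.
  assert (He2 : e <= d0/2) by apply Rmin_r.
  assert (Jp : In_J s (x + e)) by (apply Hy; rewrite Rabs_right; lra).
  assert (Jq : In_J s (x - e)) by (apply Hy; rewrite Rabs_left; lra).
  assert (cont : forall a b, In_J s a -> In_J s b -> forall z, a <= z <= b -> continuous f z).
  { intros a b Ha Hb z Hz. apply f_cont; auto. apply (J_between s a b z Hs Ha Hb).
    unfold Rmin, Rmax. destruct (Rle_dec a b); lra. }
  assert (P1 : 0 < RInt f x (x + e)).
  { apply RInt_gt_0; [lra| |].
    - intros z Hz. apply f_pos; auto. apply (J_between s x (x+e) z Hs Hx Jp).
      unfold Rmin, Rmax. destruct (Rle_dec x (x+e)); lra.
    - apply (cont x (x+e)); auto. }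
  assert (P2 : 0 < RInt f (x - e) x).
  { apply RInt_gt_0; [lra| |].
    - intros z Hz. apply f_pos; auto. apply (J_between s (x - e) x z Hs Jq Hx).
      unfold Rmin, Rmax. destruct (Rle_dec (x-e) x); lra.
    - apply (cont (x-e) x); auto. }
  exists (Rmin (RInt f x (x + e)) (RInt f (x - e) x)). split; [apply Rmin_glb_lt; auto|].
  intros t Ht Hv. fold f in Hv.
  destruct (Rlt_dec (Rabs (t - x)) eta) as [|Hn]; [assumption|exfalso].
  destruct (Rle_dec x t).
  - rewrite Rabs_right in Hn by lra.
    assert (Ch : RInt f x (x + e) + RInt f (x + e) t = RInt f x t)
      by (apply ChaslesR; apply ex_RInt_J; auto).
    assert (G : 0 <= RInt f (x + e) t).
    { apply RInt_ge_0; [lra| apply ex_RInt_J; auto |].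
      intros z Hz. left. apply f_pos; auto. apply (J_up s (x+e) z Hs Jp). lra. }
    assert (Hm := Rmin_l (RInt f x (x + e)) (RInt f (x - e) x)).
    rewrite Rabs_right in Hv by lra. lra.
  - rewrite Rabs_left in Hn by lra.
    assert (Jt := Ht).
    assert (Ch : RInt f t (x - e) + RInt f (x - e) x = RInt f t x)
      by (apply ChaslesR; apply ex_RInt_J; auto).
    assert (G : 0 <= RInt f t (x - e)).
    { apply RInt_ge_0; [lra| apply ex_RInt_J; auto |].
      intros z Hz. left. apply f_pos; auto. apply (J_up s t z Hs Ht). lra. }
    assert (Sw : RInt f x t = - RInt f t x) by (apply RInt_swapR; apply ex_RInt_J; auto).
    assert (Hm := Rmin_r (RInt f x (x + e)) (RInt f (x - e) x)).
    rewrite Sw, Rabs_Ropp, Rabs_right in Hv by lra. lra.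
Qed.

Lemma quot_lim F V x g c : c <> 0 -> derivable_pt_lim F x g -> derivable_pt_lim V x c -> V x = 0 ->
  forall e, 0 < e -> exists eta, 0 < eta /\ forall t, t <> x -> Rabs (t - x) < eta -> V t <> 0 ->
    Rabs ((F t - F x) / V t - g / c) < e.
Proof.
  intros Hc HF HV HV0 e He.
  set (H := fun t => (F t - F x) - (g / c) * V t).
  assert (HH : derivable_pt_lim H x 0).
  { eapply D_ext. apply D_sub. apply D_sub. exact HF. apply D_const.
    apply (D_mul (fun _ => g / c) V). apply D_const. exact HV.
    field. exact Hc. }
  assert (Hca : 0 < Rabs c) by (apply Rabs_pos_lt; exact Hc).
  destruct (HH (e * Rabs c / 2) ltac:(nra)) as [d1 Hd1].
  destruct (HV (Rabs c / 2) ltac:(lra)) as [d2 Hd2].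
  exists (Rmin d1 d2). split; [apply Rmin_glb_lt; [apply cond_pos|apply cond_pos]|].
  intros t Htx Ht HVt.
  assert (Hh : t - x <> 0) by lra.
  assert (Hm1 : Rabs (t - x) < d1) by (eapply Rlt_le_trans; [exact Ht| apply Rmin_l]).
  assert (Hm2 : Rabs (t - x) < d2) by (eapply Rlt_le_trans; [exact Ht| apply Rmin_r]).
  specialize (Hd1 (t - x) Hh Hm1). specialize (Hd2 (t - x) Hh Hm2).
  replace (x + (t - x)) with t in Hd1, Hd2 by ring.
  unfold H in Hd1. rewrite HV0 in Hd1, Hd2.
  replace (F t - F x - g / c * V t - (F x - F x - g / c * 0)) with (F t - F x - g / c * V t) in Hd1 by ring.
  rewrite Rminus_0_r in Hd1. replace (V t - 0) with (V t) in Hd2 by ring.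
  set (A := (F t - F x - g / c * V t) / (t - x)) in *.
  set (B := V t / (t - x)) in *.
  assert (HB : Rabs c / 2 < Rabs B).
  { pose proof (Rabs_triang_inv c B). rewrite <- Rabs_Ropp in Hd2.
    replace (- (B - c)) with (c - B) in Hd2 by ring. lra. }
  assert (HBn : B <> 0) by (intro Hb; rewrite Hb, Rabs_R0 in HB; lra).
  replace ((F t - F x) / V t - g / c) with (A / B) by (unfold A, B; field; auto).
  rewrite Rabs_div by exact HBn.
  apply Rlt_div_l; [lra|]. nra.
Qed.

Lemma partial_gen s U F x g : scase s ->
  (forall r, In_J s r -> improper_integral (fun t => / tau s t) r (- U r)) ->
  In_J s x -> derivable_pt_lim F x g ->
  forall e, 0 < e -> exists d, 0 < d /\ forall t, In_J s t ->
    0 < Rabs (U t - U x) < d ->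
    Rabs ((F t - F x) / (U t - U x) - g * tau s x) < e.
Proof.
  intros Hs HU Hx HF e He.
  assert (Htx := tau_pos s x Hs Hx).
  assert (HV0 : RInt (fun u => / tau s u) x x = 0) by (apply (@RInt_point R_CompleteNormedModule)).
  destruct (quot_lim F (fun t => RInt (fun u => / tau s u) x t) x g (/ tau s x)
     ltac:(apply Rinv_neq_0_compat; lra) HF (V_deriv s x Hs Hx) HV0 e He) as [eta [Heta Hq]].
  destruct (V_sep s x Hs Hx eta Heta) as [d [Hd Hsep]].
  exists d. split; [exact Hd|]. intros t Ht [Hp Hlt].
  rewrite (U_diff s U x t Hs HU Hx Ht) in Hp, Hlt |- *.
  replace (g * tau s x) with (g / / tau s x) by (field; lra).
  apply Hq.
  - intro Heq. subst t. rewrite HV0, Rabs_R0 in Hp. lra.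
  - apply Hsep; assumption.
  - intro H0. rewrite H0, Rabs_R0 in Hp. lra.
Qed.

Lemma partial_one eps delta phi U r i j :
  (eps = 1%Z \/ eps = (-1)%Z) -> (delta = (-1)%Z \/ delta = 0%Z \/ delta = 1%Z) ->
  (forall r, In_J (eps * delta) r ->
         improper_integral (fun t => / tau (eps * delta) t) r (- U r)) ->
  (forall k, In_J (eps * delta) (r k)) ->
  (forall m, 1 < Cv eps delta phi r m) ->
  0 < Dlt eps (Cv eps delta phi r i) (Cv eps delta phi r (nxt i)) (Cv eps delta phi r (nxt (nxt i))) ->
  partial_theta_u eps delta phi U r i j (G eps delta phi r i j * tau (eps * delta) (r j)).
Proof.
  intros He Hd HU HJ HC HD.
  assert (Hs : scase (eps * delta)).
  { unfold scase. destruct He as [-> | ->]; destruct Hd as [-> | [-> | ->]]; simpl; auto. }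
  assert (Htj := tau_pos _ _ Hs (HJ j)).
  intros e He0.
  destruct (partial_gen _ U _ _ _ Hs HU (HJ j)
             (theta_deriv eps delta phi r i j He Hd Htj HC HD) e He0) as [d [Hd0 H]].
  exists d. split; [exact Hd0|]. intros t HMt Hlt.
  assert (HJt : In_J (eps * delta) t).
  { destruct HMt as [HJt _]. specialize (HJt j). unfold upd in HJt.
    destruct j; exact HJt. }
  specialize (H t HJt Hlt). cbv beta in H. rewrite upd_same in H. exact H.
Qed.

Theorem lemma4p3 :
  forall (eps delta : Z) (phi : idx -> R),
    (eps = 1%Z \/ eps = (-1)%Z) ->
    (delta = (-1)%Z \/ delta = 0%Z \/ delta = 1%Z) ->
    (forall k, In_I delta (phi k)) ->
    forall U : R -> R,
      (forall r, In_J (eps * delta) r ->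
         improper_integral (fun t => / tau (eps * delta) t) r (- U r)) ->
      forall r : idx -> R, in_M eps delta phi r ->
        forall i j : idx, exists D,
          partial_theta_u eps delta phi U r i j D /\
          partial_theta_u eps delta phi U r j i D.
Proof.
  intros eps delta phi He Hd Hphi U HU r HM i j.
  destruct HM as [HJ [Hdef Htri]].
  assert (Hs : scase (eps * delta)).
  { unfold scase. destruct He as [-> | ->]; destruct Hd as [-> | [-> | ->]]; simpl; auto. }
  assert (HC : forall m, 1 < Cv eps delta phi r m) by (intro m; exact (Hdef m)).
  assert (Ht : forall m, 0 < tau (eps * delta) (r m)) by (intro m; apply tau_pos; auto).
  assert (HD1 : 0 < Dlt eps (Cv eps delta phi r i1) (Cv eps delta phi r i2) (Cv eps delta phi r i3)).
  { destruct He as [He | He].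
    - destruct Htri as [Hpos Htr]. subst eps. specialize (Htr eq_refl).
      destruct (arcosh_facts _ (HC i1)) as [c1 _].
      destruct (arcosh_facts _ (HC i2)) as [c2 _].
      destruct (arcosh_facts _ (HC i3)) as [c3 _].
      pose proof (Htr i1) as t1. pose proof (Htr i2) as t2. pose proof (Htr i3) as t3.
      pose proof (Hpos i1) as p1. pose proof (Hpos i2) as p2. pose proof (Hpos i3) as p3.
      assert (Hl : forall m, l_len 1 delta phi r m = arcosh (Cv 1 delta phi r m)) by reflexivity.
      cbv [nxt] in t1, t2, t3. repeat rewrite Hl in t1. repeat rewrite Hl in t2.
      repeat rewrite Hl in t3. rewrite Hl in p1, p2, p3.
      rewrite <- c1, <- c2, <- c3. apply Delta_pos1; lra.
    - subst eps. apply Delta_posm1; auto. }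
  assert (HD : forall i, 0 < Dlt eps (Cv eps delta phi r i) (Cv eps delta phi r (nxt i))
                                   (Cv eps delta phi r (nxt (nxt i)))).
  { intros k. destruct k; simpl nxt; unfold Dlt in *; lra. }
  exists (G eps delta phi r i j * tau (eps * delta) (r j)). split.
  - apply partial_one; auto.
  - rewrite (G_sym eps delta phi r i j He Ht HC HD1). apply partial_one; auto.
Qed.
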